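(* Let $\ell$ be a generic length vector of length $n\ge4$ having a nonempty gee, and let $m=n-3$. Then there is no subset $S\subset[\![m+2]\!]$ such that for every $I\subset[\![m+2]\!]$ with $|I|\le m$, $$\phi(R^{m-|I|}V_I)=\begin{cases}1&I\subset S,\\0&\text{otherwise.}\end{cases}$$
   Context: A generic length vector $\ell=(\ell_1,\ldots,\ell_n)$: positive reals, $\ell_1\le\cdots\le\ell_n<\ell_1+\cdots+\ell_{n-1}$, with no $S\subset[\![n]\!]=\{1,\ldots,n\}$ having $\sum_{i\in S}\ell_i=\sum_{i\notin S}\ell_i$. $\overline{M}(\ell)=\{(z_1,\ldots,z_n)\in(S^1)^n:\sum\ell_iz_i=0\}/O(2)$, a closed connected $m$-manifold. $S\subset[\![n]\!]$ is short if $\sum_{i\in S}\ell_i<\sum_{i\notin S}\ell_i$; a subgee is $S\subset[\![n-1]\!]$ with $S\cup\{n\}$ short; gees are the maximal subgees. Cohomology has $\mathbb{Z}_2$ coefficients. By Hausmann–Knudsen, $H^*(\overline{M}(\ell))$ is generated by $R,V_1,\ldots,V_{n-1}\in H^1$ subject only to: (i) monomials of the same degree divisible by exactly the same set of $V_i$'s are equal; with $V_I=\prod_{i\in I}V_i$, the classes $R^{d-|I|}V_I$ span $H^d$; (ii) $V_I=0$ unless $I$ is a subgee; (iii) for each subgee $S$ with $|S|\ge n-2-d$, $\sum_{T}R^{d-|T|}V_T=0$ in $H^d$, summed over $T\subset[\![n-1]\!]$, $|T|\le d$, $T\cap S=\emptyset$. $\phi:H^m(\overline{M}(\ell))\to\mathbb{Z}_2$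 is the isomorphism (evaluation on the fundamental class). *)

(* Defs.v *)
From HB Require Import structures.
From mathcomp Require Import all_boot all_order all_algebra.
From mathcomp Require Import reals.
From mathcomp Require Import mpoly.
Set Implicit Arguments. Unset Strict Implicit. Unset Printing Implicit Defensive.
Import Order.TTheory GRing.Theory Num.Theory.
Local Open Scope ring_scope.

(* [[n]] = {1,...,n} is encoded as 'I_n, the ordinal i standing for i+1.
   So the last index n corresponds to the ordinal with value n.-1. *)
Definition is_last {n : nat} (i : 'I_n) : bool := val i == n.-1.

Definition in_n1 {n : nat} (S : {set 'I_n}) : bool := [forall i in S, ~~ is_last i].

Definition generic_length_vector (R : realType) (n : nat) (l : 'I_n -> R) : Prop :=
  [/\ forall i, 0 < l i,
      forall i j : 'I_n, (val i <= val j)%N -> l i <= l j,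
      forall i : 'I_n, is_last i -> l i < \sum_(j | j != i) l j
    & forall S : {set 'I_n}, \sum_(i in S) l i != \sum_(i in ~: S) l i ].

Definition short (R : realType) (n : nat) (l : 'I_n -> R) (S : {set 'I_n}) : bool :=
  \sum_(i in S) l i < \sum_(i in ~: S) l i.

Definition subgee (R : realType) (n : nat) (l : 'I_n -> R) (S : {set 'I_n}) : Prop :=
  in_n1 S /\ short l (S :|: [set i | is_last i]).

Definition gee (R : realType) (n : nat) (l : 'I_n -> R) (S : {set 'I_n}) : Prop :=
  subgee l S /\ forall S' : {set 'I_n}, subgee l S' -> S \subset S' -> S' = S.

(* Polynomial ring Z_2[R, V_1, ..., V_{n-1}] : the variable 'X_i with i < n-1
   is V_{i+1}, the variable 'X_i with i = n-1 (the last ordinal) is R. *)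
Notation Poly n := {mpoly 'F_2[n]}.

(* R (= 'X_last; the sum has exactly one term when n > 0) *)
Definition Rv (n : nat) : Poly n := \sum_(i < n | is_last i) 'X_i.

Definition VI (n : nat) (I : {set 'I_n}) : Poly n := \prod_(i in I) 'X_i.

Definition HK_rel (R : realType) (n : nat) (l : 'I_n -> R) (g : Poly n) : Prop :=
  (exists m m' : 'X_{1..n},
      mdeg m = mdeg m' /\ (forall i : 'I_n, ~~ is_last i -> (0 < m i)%N = (0 < m' i)%N)
      /\ g = 'X_[m] - 'X_[m'])
  \/
  (exists I : {set 'I_n}, in_n1 I /\ ~ subgee l I /\ g = VI I)
  \/
  (exists (S : {set 'I_n}) (d : nat), subgee l S /\ (n - 2 <= #|S| + d)%N /\
      g = \sum_(T : {set 'I_n} | [&& in_n1 T, (#|T| <= d)%N & [disjoint T & S]])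
            Rv n ^+ (d - #|T|) * VI T).

Definition in_ideal (n : nat) (gens : Poly n -> Prop) (p : Poly n) : Prop :=
  exists s : seq (Poly n * Poly n),
    (forall x, x \in s -> gens x.2) /\ p = \sum_(x <- s) x.1 * x.2.

(* p represents the zero class of H^*(Mbar(l); Z_2) *)
Definition HK_zero (R : realType) (n : nat) (l : 'I_n -> R) (p : Poly n) : Prop :=
  in_ideal (HK_rel l) p.

(* Main.v *)
Require Import Defs.
From HB Require Import structures.
From mathcomp Require Import all_boot all_order all_algebra.
From mathcomp Require Import reals.
From mathcomp Require Import mpoly.
From mathcomp Require Import zify lra.
From Stdlib Require Import Classical.
Set Implicit Arguments. Unset Strict Implicit. Unset Printing Implicit Defensive.
Import Order.TTheory GRing.Theory Num.Theory.
Local Open Scope ring_scope.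

Lemma ideal0 n (gens : {mpoly 'F_2[n]} -> Prop) : in_ideal gens 0.
Proof. by exists [::]; split => //; rewrite big_nil. Qed.

Lemma idealD n (gens : {mpoly 'F_2[n]} -> Prop) p q :
  in_ideal gens p -> in_ideal gens q -> in_ideal gens (p + q).
Proof.
move=> [s1 [h1 ->]] [s2 [h2 ->]]; exists (s1 ++ s2); split; last by rewrite big_cat.
by move=> x; rewrite mem_cat => /orP [/h1|/h2].
Qed.

Lemma idealN n (gens : {mpoly 'F_2[n]} -> Prop) p :
  in_ideal gens p -> in_ideal gens (- p).
Proof.
move=> [s [h ->]]; exists [seq (- x.1, x.2) | x <- s]; split.
  by move=> x /mapP [y ys ->] /=; apply: h.
rewrite big_map -sumrN; apply: eq_bigr => i _; by rewrite mulNr.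
Qed.

Lemma idealG n (gens : {mpoly 'F_2[n]} -> Prop) a g :
  gens g -> in_ideal gens (a * g).
Proof.
move=> hg; exists [:: (a, g)]; split; first by move=> x; rewrite inE => /eqP ->.
by rewrite big_cons big_nil addr0.
Qed.

Lemma exists_sub_card (T : finType) (k : nat) (A : {set T}) :
  (k <= #|A|)%N -> exists B : {set T}, B \subset A /\ #|B| = k.
Proof.
elim: k A => [|k IH] A hk; first by exists set0; rewrite sub0set cards0.
have : (0 < #|A|)%N by lia.
move/card_gt0P => [a aA].
have := cardsD1 a A; rewrite aA => hc.
have [B [BA cB]] : exists B : {set T}, B \subset A :\ a /\ #|B| = k.
  apply: IH; lia.
exists (a |: B); split.
  apply/subsetP => y; rewrite !inE => /orP [/eqP ->//|yB].
  by have := subsetP BA y yB; rewrite !inE => /andP [].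
rewrite cardsU1 cB.
have -> : a \notin B.
  apply/negP => aB; have := subsetP BA a aB; by rewrite !inE eqxx.
by [].
Qed.

Theorem lemma2p1 (R : realType) (n : nat) (l : 'I_n -> R) :
  (4 <= n)%N ->
  generic_length_vector l ->
  (exists G : {set 'I_n}, gee l G /\ G != set0) ->
  ~ exists S : {set 'I_n},
      in_n1 S /\
      forall I : {set 'I_n}, in_n1 I -> (#|I| <= n - 3)%N ->
        (~ HK_zero l (Rv n ^+ ((n - 3) - #|I|) * VI I) <-> I \subset S).
Proof.
move=> n4 [lpos lmono _ _] [G [[gG _] G0]] [S [S1 HS]].
pose F (I : {set 'I_n}) := Rv n ^+ ((n - 3) - #|I|) * VI I.
have Hz : forall I, in_n1 I -> (#|I| <= n - 3)%N -> ~~ (I \subset S) -> HK_zero l (F I).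
  move=> I h1 h2 h3; apply: NNPP => h; apply: (negP h3); exact/(HS I h1 h2).
have Hnz : forall I, in_n1 I -> (#|I| <= n - 3)%N -> I \subset S -> ~ HK_zero l (F I).
  by move=> I h1 h2 h3; apply/(HS I h1 h2).
have Hsub : forall I, in_n1 I -> (#|I| <= n - 3)%N -> I \subset S -> subgee l I.
  move=> I h1 h2 h3; apply: NNPP => h; apply: (Hnz I h1 h2 h3).
  apply: idealG; right; left; by exists I.
have in_n1_sub : forall I : {set 'I_n}, I \subset S -> in_n1 I.
  move=> I /subsetP IS; apply/forallP => i; apply/implyP => iI.
  by move/forallP: S1 => /(_ i) /implyP; apply; apply: IS.
case: (leqP #|S| (n - 3)) => hS.
- have [S' [gS' S'0 SS']] : exists S', [/\ subgee l S', S' != set0 & S \subset S'].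
    case: (eqVneq S set0) => [->|Sn0]; first by exists G; rewrite sub0set.
    by exists S; split => //; apply: Hsub.
  pose P (T : {set 'I_n}) := [&& in_n1 T, (#|T| <= n - 3)%N & [disjoint T & S']].
  pose g := \sum_(T : {set 'I_n} | P T) F T.
  have hg : HK_rel l g.
    right; right; exists S', (n - 3)%N; split => //; split => //.
    have : (0 < #|S'|)%N by rewrite card_gt0.
    lia.
  have P0 : P set0.
    rewrite /P cards0 /=; apply/andP; split.
      by apply/forallP => i; rewrite inE.
    by apply/pred0P => i; rewrite /= inE.
  have eg : g = F set0 + \sum_(T | P T && (T != set0)) F T by rewrite /g (bigD1 set0).
  have hrest : HK_zero l (\sum_(T | P T && (T != set0)) F T).
    apply: (big_ind (fun p => HK_zero l p)); [exact: ideal0 | exact: idealD|].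
    move=> T /andP [/and3P [h1 h2 h3] h4]; apply: Hz => //.
    move: h4 => /set0Pn [t tT]; apply/subsetP => /(_ t tT) tS.
    move: h3; rewrite disjoint_subset => /subsetP /(_ t tT); rewrite inE.
    by rewrite (subsetP SS' t tS).
  apply: (Hnz set0); [by apply/forallP => i; rewrite inE | by rewrite cards0 | by rewrite sub0set |].
  have -> : F set0 = g - \sum_(T | P T && (T != set0)) F T by rewrite eg addrK.
  apply: idealD; last by apply: idealN.
  by rewrite -(mul1r g); apply: idealG.
- have [x0 x0S] : exists x0, x0 \in S by apply/card_gt0P; lia.
  pose x := [arg min_(i < x0 in S) val i].
  have [xS xmin] : x \in S /\ forall j, j \in S -> (val x <= val j)%N.
    rewrite /x; case: arg_minnP => // i iS imin; by split.
  have cSx := cardsD1 x S; rewrite xS in cSx.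
  have [T [TS cT]] : exists T : {set 'I_n}, T \subset S :\ x /\ #|T| = (n - 3)%N.
    apply: exists_sub_card; lia.
  have TS' : T \subset S.
    apply/subsetP => y /(subsetP TS); by rewrite !inE => /andP [].
  have [_ sh] := Hsub T (in_n1_sub T TS') (eq_leq cT) TS'.
  have nlt : (n.-1 < n)%N by lia.
  pose lst : 'I_n := Ordinal nlt.
  have el : [set i | is_last i] = [set lst].
    apply/setP => i; rewrite !inE /is_last; apply/idP/idP => /eqP h; apply/eqP.
      by apply: val_inj. by rewrite h.
  have lT : lst \notin T.
    apply/negP => hl.
    move: (in_n1_sub T TS') => /forallP /(_ lst) /implyP /(_ hl).
    by rewrite /is_last eqxx.
  have xT : x \notin T.
    apply/negP => /(subsetP TS); by rewrite !inE eqxx.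
  have xl : x != lst.
    apply/negP => /eqP ex.
    move/forallP: S1 => /(_ x) /implyP /(_ xS); by rewrite ex /is_last eqxx.
  move: sh; rewrite /short el setUC -/(lst |: T).
  set A := lst |: T.
  have cA : #|A| = (n - 2)%N by rewrite /A cardsU1 lT cT; lia.
  have cCA : #|~: A| = 2%N.
    have := cardsC A; rewrite cA card_ord; lia.
  have xCA : x \in ~: A by rewrite !inE negb_or xl xT.
  have hc1 : #|~: A| = ((x \in ~: A) + #|~: A :\ x|)%N := cardsD1 x (~: A).
  rewrite xCA cCA in hc1.
  have /cards1P [c ec] : #|~: A :\ x| == 1%N.
    by apply/eqP; move: hc1; rewrite /nat_of_bool; lia.
  have [t tT] : exists t, t \in T by apply/card_gt0P; lia.
  have key : \sum_(i in ~: A) l i <= \sum_(i in A) l i.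
    have e1 : \sum_(i in ~: A) l i = l x + \sum_(i in ~: A :\ x) l i := big_setD1 _ xCA.
    have e2 : \sum_(i in A) l i = l lst + \sum_(i in T) l i := big_setU1 _ lT.
    have e3 : \sum_(i in T) l i = l t + \sum_(i in T :\ t) l i := big_setD1 _ tT.
    rewrite e1 e2 e3 ec big_set1.
    have h1 : 0 <= \sum_(i in T :\ t) l i by apply: sumr_ge0 => i _; apply/ltW.
    have h2 : l x <= l t.
      apply: lmono; apply: xmin; exact: (subsetP TS').
    have h3 : l c <= l lst by apply: lmono => /=; have := ltn_ord c; lia.
    lra.
  by move=> sh; move: (lt_le_trans sh key); rewrite ltxx.
Qed.
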